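(* Let $n\ge3$ and for $i\in\mathbb Z/n\mathbb Z$ let $e_i=x_{i,i+1}\in\mathcal E_n$, where the vertices are labeled $0,1,\dots,n-1$ modulo $n$. Then in $\mathcal E_n$: $$R_1:=\sum_{i=0}^{n-1}e_{i-1}e_{i-2}\cdots e_{1}e_0\,e_{n-1}e_{n-2}\cdots e_{i+1}=0,\qquad R_{n-1}:=\sum_{i=0}^{n-1}e_{i+1}e_{i+2}\cdots e_{n-1}\,e_0e_1\cdots e_{i-1}=0,$$ where the $i$-th summand of $R_1$ is the product of all $e_j$ with $j\ne i$ in cyclically decreasing order of index starting from $e_{i-1}$ and ending with $e_{i+1}$, and the $i$-th summand of $R_{n-1}$ is the product of all $e_j$ with $j\neq i$ in cyclically increasing order starting from $e_{i+1}$ and ending with $e_{i-1}$.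
   Context: Let $n\ge 1$. The Fomin–Kirillov algebra $\mathcal E_n$ is the associative $\mathbb Q$-algebra with generators $x_{ij}$ for ordered pairs of distinct $i,j$ in an $n$-element index set (here $\{0,1,\dots,n-1\}$), subject to $x_{ij}=-x_{ji}$, $x_{ij}^2=0$, $x_{ij}x_{kl}=x_{kl}x_{ij}$ for distinct $i,j,k,l$, and $x_{ij}x_{jk}+x_{jk}x_{ki}+x_{ki}x_{ij}=0$ for distinct $i,j,k$. *)

(* Defs.v *)
From HB Require Import structures.
From mathcomp Require Import all_boot all_order all_algebra.
Set Implicit Arguments. Unset Strict Implicit. Unset Printing Implicit Defensive.
Import GRing.Theory.
Local Open Scope ring_scope.

(* The defining relations of the Fomin--Kirillov algebra E_n, for a family
   x : 'I_n -> 'I_n -> A of elements of a ring A (indices 0..n-1).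
   Only the values x i j with i <> j are generators; the diagonal is unused. *)
Definition FK_relations (n : nat) (A : pzRingType) (x : 'I_n -> 'I_n -> A) : Prop :=
  [/\ (forall i j : 'I_n, i != j -> x i j = - x j i),
      (forall i j : 'I_n, i != j -> x i j * x i j = 0),
      (forall i j k l : 'I_n, uniq [:: i; j; k; l] -> x i j * x k l = x k l * x i j) &
      (forall i j k : 'I_n, uniq [:: i; j; k] ->
          x i j * x j k + x j k * x k i + x k i * x i j = 0)].

(* e_j = x_{j, j+1}, with j read modulo n (j : nat). For n = 0 it is 0 (unused). *)
Definition FK_e (n : nat) (A : pzRingType) (x : 'I_n -> 'I_n -> A) (j : nat) : A :=
  match n as m return ('I_m -> 'I_m -> A) -> A with
  | 0 => fun _ => 0
  | m.+1 => fun y => y (inZp j) (inZp j.+1)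
  end x.

Definition FK_R1 (n : nat) (A : pzRingType) (x : 'I_n -> 'I_n -> A) : A :=
  \sum_(0 <= i < n) \prod_(1 <= k < n) FK_e x (i + n - k)%N.

Definition FK_Rn1 (n : nat) (A : pzRingType) (x : 'I_n -> 'I_n -> A) : A :=
  \sum_(0 <= i < n) \prod_(1 <= k < n) FK_e x (i + k)%N.

(* Main.v *)
Require Import Defs.
From HB Require Import structures.
From mathcomp Require Import all_boot all_order all_algebra.
From mathcomp Require Import zify.
Set Implicit Arguments. Unset Strict Implicit. Unset Printing Implicit Defensive.
Import GRing.Theory.
Local Open Scope ring_scope.

Fixpoint pp (n : nat) (R : pzRingType) (x : 'I_n -> 'I_n -> R) (s : seq 'I_n) : R :=
  match s with
  | a :: ((b :: _) as t) => x a b * pp x t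
  | _ => 1
  end.

Definition Scyc (n : nat) (R : pzRingType) (x : 'I_n -> 'I_n -> R) (s : seq 'I_n) : R :=
  \sum_(0 <= i < size s) pp x (rot i s).

Lemma pp_cons2 n (R : pzRingType) (x : 'I_n -> 'I_n -> R) a b r :
  pp x (a :: b :: r) = x a b * pp x (b :: r).
Proof. by []. Qed.

Lemma pp_cat n (R : pzRingType) (x : 'I_n -> 'I_n -> R) a p b q :
  pp x ((a :: p) ++ b :: q) = pp x (a :: p) * x (last a p) b * pp x (b :: q).
Proof.
elim: p a => [|c p IH] a; first by rewrite /= mul1r.
have -> : (a :: c :: p) ++ b :: q = a :: c :: (p ++ b :: q) by [].
rewrite pp_cons2.
change (pp x (c :: p ++ b :: q)) with (pp x ((c :: p) ++ b :: q)).
by rewrite IH pp_cons2 !mulrA.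
Qed.

Lemma pp_comm n (R : pzRingType) (x : 'I_n -> 'I_n -> R) a b p :
  (forall i j k l : 'I_n, uniq [:: i; j; k; l] -> x i j * x k l = x k l * x i j) ->
  a != b -> a \notin p -> b \notin p -> uniq p -> x a b * pp x p = pp x p * x a b.
Proof.
move=> Hc ab; elim: p => [|c t IH] /=; first by rewrite mul1r mulr1.
rewrite !inE !negb_or => /andP[ac at_] /andP[bc bt] /andP[ct ut].
case: t IH at_ bt ct ut => [|d t] IH at_ bt ct ut; first by rewrite mul1r mulr1.
rewrite mulrA Hc; last first.
  by move: at_ bt ct; rewrite /= !inE !negb_or ab ac bc eq_sym (eq_sym b) => /andP[-> _] /andP[-> _] /andP[-> _].
by rewrite -mulrA IH // mulrA.
Qed.
Lemma S_cons n (R : pzRingType) (x : 'I_n -> 'I_n -> R) v0 v1 t :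
  (forall i j : 'I_n, i != j -> x i j = - x j i) ->
  (forall i j k l : 'I_n, uniq [:: i; j; k; l] -> x i j * x k l = x k l * x i j) ->
  (forall i j k : 'I_n, uniq [:: i; j; k] ->
          x i j * x j k + x j k * x k i + x k i * x i j = 0) ->
  uniq (v0 :: v1 :: t) ->
  Scyc x (v0 :: v1 :: t) =
    x v0 v1 * Scyc x (v1 :: t) + Scyc x (v1 :: t) * x (last v1 t) v0.
Proof.
move=> Ha Hc Ht Hu; have R1 : pp x (rcons (v1::t) v0) = pp x (v1::t) * x (last v1 t) v0.
  by rewrite -cats1 pp_cat mulr1.
rewrite /Scyc mulr_sumr mulr_suml -big_split.
rewrite [in LHS]big_ltn // [in LHS]big_add1 [in LHS]big_ltn // [in RHS]big_ltn //.
rewrite rot0 rot1_cons R1 rot0 pp_cons2.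
rewrite addrA; congr (_ + _).
apply: eq_big_nat => i /andP[i1 im].
case: i i1 im => [//|j] _ jm.
have E1 : rot j.+2 [:: v0, v1 & t] = drop j t ++ [:: v0, v1 & take j t] by [].
have E2 : rot j.+1 (v1 :: t) = drop j t ++ v1 :: take j t by [].
have U := Hu; rewrite -(rot_uniq j.+2) E1 in U.
rewrite E1 E2.
case Hd : (drop j t) U => [|d0 d'] U.
  have jt : (j < size t)%N by exact: jm.
  by move: (size_drop j t) jt; rewrite Hd /=; lia.
have Hl : last v1 t = last d0 d'.
  by rewrite -(cat_take_drop j t) Hd last_cat.
rewrite Hl.
set D := d0 :: d'; set k := take j t; set L := last v1 (d0 :: d').
have LD : L \in D by rewrite /L /= mem_last.
move: U; rewrite cat_uniq => /and3P[uD hD uK].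
case/andP: uK; rewrite inE negb_or => /andP[v01 v0k] /andP[v1k uk].
have v0D : v0 \notin D by apply/negP => H; move: hD; rewrite /= H.
have v1D : v1 \notin D by apply/negP => H; move: hD; rewrite /= H orbT.
have LK : L \notin v1 :: k.
  apply/negP => H; move/hasPn: hD => /(_ L); rewrite inE H orbT => /(_ isT).
  by rewrite LD.
have Lv0 : L != v0 by apply/eqP => E; move: v0D; rewrite -E LD.
have Lv1 : L != v1 by apply/eqP => E; move: v1D; rewrite -E LD.
have T : x L v0 * x v0 v1 = x v0 v1 * x L v1 + x L v1 * x L v0.
  have U3 : uniq [:: L; v0; v1] by rewrite /= !inE negb_or Lv0 Lv1 v01.
  move/eqP: (Ht L v0 v1 U3); rewrite (Ha v1 L); last by rewrite eq_sym.
  by rewrite mulrN mulNr -addrA addr_eq0 -opprD opprK => /eqP.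
have C1 : x v0 v1 * pp x D = pp x D * x v0 v1 by apply: pp_comm.
have C2 : x L v0 * pp x (v1 :: k) = pp x (v1 :: k) * x L v0.
  have v0K : v0 \notin v1 :: k by rewrite inE negb_or v01 v0k.
  have uK1 : uniq (v1 :: k) by apply/andP.
  by apply: pp_comm.
rewrite !pp_cat pp_cons2 -/D -/L.
rewrite mulrA -(mulrA (pp x D)) T mulrDr mulrDl !mulrA -C1.
by rewrite -(mulrA (pp x D * x L v1)) C2 !mulrA.
Qed.

Lemma S0 n (R : pzRingType) (x : 'I_n -> 'I_n -> R) s :
  (forall i j : 'I_n, i != j -> x i j = - x j i) ->
  (forall i j k l : 'I_n, uniq [:: i; j; k; l] -> x i j * x k l = x k l * x i j) ->
  (forall i j k : 'I_n, uniq [:: i; j; k] ->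
          x i j * x j k + x j k * x k i + x k i * x i j = 0) ->
  uniq s -> (2 <= size s)%N -> Scyc x s = 0.
Proof.
move=> Ha Hc Ht; elim: s => [|v0 t IH] //; case: t IH => [|v1 t] IH // Hu Hs.
rewrite S_cons //.
case: t IH Hu Hs => [|v2 t] IH Hu Hs.
  have v01 : v0 != v1 by move: Hu => /= /andP[]; rewrite inE.
  rewrite /Scyc big_nat1 rot0 /= mulr1 mul1r (Ha v0 v1) //.
  by rewrite addNr.
rewrite IH ?mulr0 ?mul0r ?addr0 //.
by case/andP: Hu.
Qed.

Lemma pp_iota n (R : pzRingType) (x : 'I_n -> 'I_n -> R) (w : nat -> 'I_n) a l :
  pp x (map w (iota a l.+1)) = \prod_(0 <= k < l) x (w (a + k)%N) (w (a + k).+1).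
Proof.
elim: l a => [|l IH] a; first by rewrite big_geq.
rewrite [iota _ _]/= [iota _ _]/= [map _ _]/= pp_cons2.
rewrite -[_ :: map _ _]/(map w (iota a.+1 l.+1)) IH.
rewrite [in RHS]big_ltn // [in RHS]big_add1 /= addn0; congr (_ * _).
by apply: eq_big_nat => k _; rewrite addSnnS.
Qed.

Lemma inZp_per n' b : (inZp (b + n'.+1) : 'I_n'.+1) = inZp b.
Proof. by apply: val_inj; rewrite /= modnDr. Qed.

Lemma map_iota_per n' a i :
  map (fun j => (inZp j : 'I_n'.+1)) (iota (a + n'.+1) i) =
  map (fun j => (inZp j : 'I_n'.+1)) (iota a i).
Proof.
elim: i a => [|i IH] a //=; by rewrite inZp_per -(IH a.+1) addSn.
Qed.

Lemma rot_iota n' a i : (i <= n'.+1)%N ->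
  rot i (map (fun j => (inZp j : 'I_n'.+1)) (iota a n'.+1)) =
  map (fun j => (inZp j : 'I_n'.+1)) (iota (a + i) n'.+1).
Proof.
move=> hi; rewrite -map_rot /rot drop_iota take_iota (minn_idPl hi) map_cat.
rewrite -(map_iota_per n' a i) -map_cat.
have -> : (a + n'.+1 = a + i + (n'.+1 - i))%N by lia.
by rewrite -iotaD subnK.
Qed.

Lemma Rn1_zero n (R : pzRingType) (x : 'I_n -> 'I_n -> R) :
  (3 <= n)%N -> FK_relations x -> FK_Rn1 x = 0.
Proof.
case: n x => [//|n'] x Hn [Ha Hsq Hc Ht].
set w := fun j => (inZp j : 'I_n'.+1).
have E : FK_Rn1 x = Scyc x (map w (iota 1 n'.+1)).
  rewrite /FK_Rn1 /Scyc size_map size_iota.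
  apply: eq_big_nat => i /andP[_ hi].
  rewrite /rot_iota (rot_iota 1 (ltnW hi)) add1n -[n'.+1]/(n'.+1) pp_iota.
  rewrite big_add1 /=; apply: eq_big_nat => k _.
  by rewrite /FK_e /w addnS addSn.
rewrite E; apply: S0 => //; last by rewrite size_map size_iota; lia.
rewrite -[1%N]/(0 + 1)%N -rot_iota // rot_uniq map_inj_in_uniq ?iota_uniq //.
move=> a b; rewrite !mem_iota /= !add0n => ha hb /(congr1 val) /=.
by rewrite !modn_small.
Qed.

Lemma FK_conv n (R : pzRingType) (x : 'I_n -> 'I_n -> R) :
  FK_relations x -> @FK_relations n (R^c) x.
Proof.
case=> Ha Hs Hc Ht; split.
- exact: Ha.
- exact: Hs.
- by move=> i j k l h; exact: (esym (Hc i j k l h)).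
- move=> i j k h.
  have [ij ik jk] : [/\ i != j, i != k & j != k].
    by move: h; rewrite /= !inE !negb_or => /andP[/andP[-> ->] /andP[-> _]].
  have h' : uniq [:: i; k; j] by rewrite /= !inE !negb_or ij ik eq_sym jk.
  move: (Ht i k j h'); rewrite (Ha i k) // (Ha k j) 1?eq_sym // (Ha j i) 1?eq_sym //.
  rewrite !mulrNN => H.
  change (x j k * x i j + x k i * x j k + x i j * x k i = 0 :> R).
  by rewrite (addrC (x j k * x i j)) H.
Qed.

Lemma rev_iota1 n : rev (iota 1 n.-1) = map (fun k => n - k)%N (iota 1 n.-1).
Proof.
apply: (@eq_from_nth _ 0%N); first by rewrite size_rev size_map.
move=> i; rewrite size_rev size_iota => hi.
rewrite nth_rev ?size_iota // (nth_map 0%N) ?size_iota // !nth_iota //; last lia.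
lia.
Qed.

Lemma R1_conv n (A : pzRingType) (x : 'I_n -> 'I_n -> A) :
  FK_R1 x = (FK_Rn1 (x : 'I_n -> 'I_n -> A^c) : A).
Proof.
rewrite /FK_R1 /FK_Rn1; apply: eq_big_nat => i _.
rewrite rev_prodr /index_iota subn1 rev_iota1 big_map.
apply: eq_big_seq => k; rewrite mem_iota => /andP[_ hk].
by rewrite addnBA //; lia.
Qed.

Unset Implicit Arguments.
Theorem mainTheorem20 (n : nat) (Hn : (3 <= n)%N) (A : algType rat)
    (x : 'I_n -> 'I_n -> A) :
  FK_relations x -> FK_R1 x = 0 /\ FK_Rn1 x = 0.
Proof.
move=> H; split; last exact: Rn1_zero.
rewrite R1_conv; exact: (Rn1_zero Hn (FK_conv H)).
Qed.
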